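(* Let $R=\mathrm{Mat}_n(\mathcal O_D,\underline m)\subset\mathrm{Mat}_n(D)$ be a standard monomial order of level $\underline m=(m_{ij})$ with $m_{1i}=0$ for all $i=1,\dots,n$. Let $l_1,\dots,l_n\in\mathbb Z$ and let $M=[\mathfrak P^{l_1},\dots,\mathfrak P^{l_n}]^t=\{[x_1,\dots,x_n]^t: x_i\in\mathfrak P^{l_i}\}\subset D^n$ be a left $R$-submodule of $D^n$ (where $R$ acts on column vectors by matrix multiplication). Then $M$ is a projective left $R$-module if and only if $M$ is, up to a scalar in $D$, a column of $R$; that is, if and only if there exist $1\le j\le n$ and $c\in\mathbb Z$ such that $l_i=m_{ij}+c$ for all $1\le i\le n$.
   Context: Let $k$ be a non-Archimedean local field with ring of integers $\mathcal O$, let $D$ be a finite-dimensional central division algebra over $k$, $\mathcal O_D$ its valuation ring, $\mathfrak P$ its maximal ideal. For $\underline m=(m_{ij})\in\mathrm{Mat}_n(\mathbb Z)$ with $m_{ii}=0$ and $m_{ik}\le m_{ij}+m_{jk}$ for all $i,j,k$, the standard monomial order of level $\underline m$ is $\mathrm{Mat}_n(\mathcal O_D,\underline m)=\{(a_{ij})\in\mathrm{Mat}_n(D): a_{ij}\in\mathfrak P^{m_{ij}}\ \forall i,j\}$. $D^n$ denotes column vectors, a right $D$-vector space and left $\mathrm{Mat}_n(D)$-module. *)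

(* Defs.v *)
From HB Require Import structures.
From mathcomp Require Import all_boot all_order all_algebra.
Set Implicit Arguments. Unset Strict Implicit. Unset Printing Implicit Defensive.
Import Order.TTheory GRing.Theory Num.Theory.
Local Open Scope ring_scope.

(* [inPow v m x] : x lies in P^m, where P = {x : v x >= 1} is the maximal
   ideal of the valuation ring O_D = {x : v x >= 0}; x = 0 always lies in P^m.
   (v is only meaningful on nonzero elements.) *)
Definition inPow (D : nzRingType) (v : D -> int) (m : int) (x : D) : bool :=
  (x == 0) || (m <= v x).

Definition division_ring (D : unitRingType) : Prop :=
  forall x : D, x != 0 -> x \is a GRing.unit.

Definition normalized_discrete_valuation (D : nzRingType) (v : D -> int) : Prop :=
  [/\ forall x y : D, x != 0 -> y != 0 -> v (x * y) = v x + v y,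
      forall x y : D, x != 0 -> y != 0 -> x + y != 0 ->
        Num.min (v x) (v y) <= v (x + y)
    & exists pi : D, pi != 0 /\ v pi = 1].

(* The valuation of k is the restriction w = v \o f. *)
Definition local_central_division_algebra
    (k : fieldType) (D : unitRingType) (f : {rmorphism k -> D}) (v : D -> int)
    : Prop :=
  division_ring D /\
  normalized_discrete_valuation v /\
      (forall x : D, (forall y : D, x * y = y * x) <-> exists a : k, x = f a) /\
      (exists (d : nat) (e : 'I_d -> D), forall x : D,
          exists c : 'I_d -> k, x = \sum_(i < d) f (c i) * e i) /\
      (exists a : k, f a != 0 /\ v (f a) != 0) /\
      (* the residue field of k is finite *)
      (exists s : seq k, forall a : k, inPow v 0 (f a) ->
          exists2 t, t \in s & inPow v 1 (f (a - t))) /\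
      (* k is complete *)
      (forall a : nat -> k,
          (forall N : int, exists M : nat, forall p q : nat,
              (M <= p)%N -> (M <= q)%N -> inPow v N (f (a p - a q))) ->
          exists l : k, forall N : int, exists M : nat, forall p : nat,
              (M <= p)%N -> inPow v N (f (a p - l))).

Definition is_level (n : nat) (m : 'I_n -> 'I_n -> int) : Prop :=
  (forall i, m i i = 0) /\ (forall i j l, m i l <= m i j + m j l).

Definition monomial_order (D : nzRingType) (v : D -> int) (n : nat)
    (m : 'I_n -> 'I_n -> int) : pred 'M[D]_n :=
  fun A => [forall i, [forall j, inPow v (m i j) (A i j)]].

Definition diag_lattice (D : nzRingType) (v : D -> int) (n : nat)
    (l : 'I_n -> int) : pred 'cV[D]_n :=
  fun x => [forall i, inPow v (l i) (x i ord0)].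

Definition is_left_submodule (D : nzRingType) (n : nat)
    (R : pred 'M[D]_n) (M : pred 'cV[D]_n) : Prop :=
  [/\ (0 : 'cV[D]_n) \in M,
      (forall x y, x \in M -> y \in M -> x + y \in M)
    & (forall r x, r \in R -> x \in M -> r *m x \in M)].

(* M is a projective left R-module: M is (isomorphic to) a direct summand of
   a free left R-module R^k, i.e. there are R-linear maps s : M -> R^k and
   p : R^k -> M with p \o s = id_M.  Elements of R^k are k-tuples
   (functions 'I_k -> 'M_n) of elements of R, with R acting by left
   multiplication componentwise. *)
Definition is_projective (D : nzRingType) (n : nat)
    (R : pred 'M[D]_n) (M : pred 'cV[D]_n) : Prop :=
  exists (k : nat) (p : ('I_k -> 'M[D]_n) -> 'cV[D]_n)
         (s : 'cV[D]_n -> ('I_k -> 'M[D]_n)),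
    (forall y, (forall i, y i \in R) -> p y \in M) /\
        (forall y z, (forall i, y i \in R) -> (forall i, z i \in R) ->
           p (fun i => y i + z i) = p y + p z) /\
        (forall r y, r \in R -> (forall i, y i \in R) ->
           p (fun i => r * y i) = r *m p y) /\
        (forall x, x \in M -> forall i, s x i \in R) /\
        (forall x y, x \in M -> y \in M -> s (x + y) = (fun i => s x i + s y i)) /\
        (forall r x, r \in R -> x \in M -> s (r *m x) = (fun i => r * s x i)) /\
      (forall x, x \in M -> p (s x) = x).

(* Main.v *)
Require Import Defs.
From HB Require Import structures.
From mathcomp Require Import all_boot all_order all_algebra.
From mathcomp Require Import zify ring.
From Stdlib Require Import FunctionalExtensionality.
Import Order.TTheory GRing.Theory Num.Theory.
Set Implicit Arguments. Unset Strict Implicit.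
Local Open Scope ring_scope.


Section Val.
Variables (D : unitRingType) (v : D -> int).
Hypothesis Hdiv : division_ring D.
Hypothesis Hmul : forall {x y : D}, x != 0 -> y != 0 -> v (x * y) = v x + v y.
Hypothesis Hadd : forall {x y : D}, x != 0 -> y != 0 -> x + y != 0 ->
        Num.min (v x) (v y) <= v (x + y).
Variable pi : D.
Hypothesis Hpi0 : pi != 0.
Hypothesis Hpi1 : v pi = 1.

Lemma unit_neq0 (x : D) : x \is a GRing.unit -> x != 0.
Proof. by apply: contraTneq => ->; rewrite unitr0. Qed.

Lemma mul_neq0 (x y : D) : x != 0 -> y != 0 -> x * y != 0.
Proof.
move=> hx hy; apply/eqP => h; move/eqP: hy; apply.
by rewrite -(mulKr (Hdiv hx) y) h mulr0.
Qed.

Lemma mul_eq0l (x y : D) : x * y != 0 -> x != 0.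
Proof. by apply: contraNneq => ->; rewrite mul0r. Qed.
Lemma mul_eq0r (x y : D) : x * y != 0 -> y != 0.
Proof. by apply: contraNneq => ->; rewrite mulr0. Qed.

Lemma v1 : v 1 = 0.
Proof.
have := Hmul (oner_neq0 D) (oner_neq0 D); rewrite mulr1 => h.
by apply: (addrI (v 1)); rewrite addr0 -h.
Qed.

Lemma vV (x : D) : x != 0 -> v x^-1 = - v x.
Proof.
move=> hx; have hu := Hdiv hx.
have hv : x^-1 != 0 by apply: unit_neq0; rewrite unitrV.
have := Hmul hx hv; rewrite mulrV // v1 => h; lia.
Qed.

Definition pw (z : int) : D :=
  match z with Posz n => pi ^+ n | Negz n => (pi ^+ n.+1)^-1 end.

Lemma piX_unit n : pi ^+ n \is a GRing.unit.
Proof. exact/unitrX/(Hdiv Hpi0). Qed.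

Lemma vX n : v (pi ^+ n) = n.
Proof.
elim: n => [|n IH]; first by rewrite expr0 v1.
rewrite exprS Hmul // ?IH ?Hpi1; first lia.
exact/unit_neq0/piX_unit.
Qed.

Lemma pw_unit z : pw z \is a GRing.unit.
Proof. by case: z => n /=; rewrite ?unitrV piX_unit. Qed.

Lemma pw_neq0 z : pw z != 0.
Proof. exact/unit_neq0/pw_unit. Qed.

Lemma vpw z : v (pw z) = z.
Proof.
case: z => n /=; first exact: vX.
rewrite vV ?vX ?NegzE //; exact/unit_neq0/piX_unit.
Qed.

Lemma inPow0 a : inPow v a 0.
Proof. by rewrite /inPow eqxx. Qed.

Lemma inPowD a x y : inPow v a x -> inPow v a y -> inPow v a (x + y).
Proof.
rewrite /inPow; case: (eqVneq x 0) => [-> _|hx] /=; first by rewrite add0r.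
case: (eqVneq y 0) => [-> h _|hy] /=; first by rewrite addr0 h orbT.
case: (eqVneq (x + y) 0) => //= hxy ha hb.
apply: le_trans (Hadd hx hy hxy); by rewrite le_min ha hb.
Qed.

Lemma inPow_sum (I : Type) (r : seq I) (P : pred I) (F : I -> D) a :
  (forall i, P i -> inPow v a (F i)) -> inPow v a (\sum_(i <- r | P i) F i).
Proof. move=> h; apply: (big_ind (fun x => inPow v a x)); [exact: inPow0|exact: inPowD|exact: h]. Qed.

Lemma inPowM_unit a x u : inPow v a x -> u != 0 ->
  inPow v (a + v u) (x * u).
Proof.
rewrite /inPow; case: (eqVneq x 0) => [-> _|hx] /=; first by rewrite mul0r eqxx.
move=> ha hu; rewrite Hmul // lerD2r ha orbT //.
Qed.

End Val.


Lemma sum_ifE (V : nmodType) N (c : 'I_N) (F : 'I_N -> V) :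
  \sum_(j < N) (if j == c then F j else 0) = F c.
Proof. by rewrite -big_mkcond big_pred1_eq. Qed.

Section Mx.
Variables (D : unitRingType) (n : nat).

Definition Emx (i j : 'I_n.+1) (a : D) : 'M[D]_n.+1 :=
  \matrix_(r, c) (if (r == i) && (c == j) then a else 0).
Definition ev (i : 'I_n.+1) (a : D) : 'cV[D]_n.+1 :=
  \col_r (if r == i then a else 0).

Lemma EmxM q i j a (A : 'M[D]_(n.+1, q)) r c :
  (Emx i j a *m A) r c = if r == i then a * A j c else 0.
Proof.
rewrite !mxE; case: (eqVneq r i) => [->|hri] /=.
  rewrite -(sum_ifE j (fun s => a * A s c)); apply: eq_bigr => s _.
  by rewrite mxE eqxx /=; case: (s == j); rewrite ?mul0r.
by apply: big1 => s _; rewrite mxE (negbTE hri) andFb mul0r.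
Qed.

Lemma MEmx (A : 'M[D]_n.+1) j r c :
  (A *m Emx j j 1) r c = if c == j then A r j else 0.
Proof.
rewrite !mxE; case: (eqVneq c j) => [->|hc] /=.
  rewrite -(sum_ifE j (fun s => A r s)); apply: eq_bigr => s _.
  by rewrite mxE eqxx andbT; case: (s == j); rewrite ?mulr1 ?mulr0.
by apply: big1 => s _; rewrite mxE (negbTE hc) andbF mulr0.
Qed.

Lemma Mev (A : 'M[D]_n.+1) j a r :
  (A *m ev j a) r ord0 = A r j * a.
Proof.
rewrite !mxE -(sum_ifE j (fun s => A r s * a)); apply: eq_bigr => s _.
by rewrite mxE; case: (s == j); rewrite ?mulr0.
Qed.

Lemma evE i a r c : ev i a r c = if r == i then a else 0.
Proof. by rewrite mxE. Qed.

Variable v : D -> int.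
Variable m : 'I_n.+1 -> 'I_n.+1 -> int.
Variable l : 'I_n.+1 -> int.

Lemma inRP (A : 'M[D]_n.+1) :
  (A \in monomial_order v m) <-> forall i j, inPow v (m i j) (A i j).
Proof.
rewrite unfold_in /monomial_order; split.
  by move=> /forallP h i j; move/forallP: (h i); apply.
by move=> h; apply/forallP => i; apply/forallP => j; apply: h.
Qed.

Lemma inMP (x : 'cV[D]_n.+1) :
  (x \in diag_lattice v l) <-> forall i, inPow v (l i) (x i 0).
Proof.
rewrite unfold_in /diag_lattice; split; first by move=> /forallP.
by move=> h; apply/forallP.
Qed.

End Mx.


Section Fwd.
Variables (D : unitRingType) (v : D -> int).
Hypothesis Hdiv : division_ring D.
Hypothesis Hmul : forall {x y : D}, x != 0 -> y != 0 -> v (x * y) = v x + v y.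
Hypothesis Hadd : forall {x y : D}, x != 0 -> y != 0 -> x + y != 0 ->
        Num.min (v x) (v y) <= v (x + y).
Variable pi : D.
Hypothesis Hpi0 : pi != 0.
Hypothesis Hpi1 : v pi = 1.
Variables (n : nat) (m : 'I_n.+1 -> 'I_n.+1 -> int).
Hypothesis Hmii : forall i, m i i = 0.
Hypothesis Hm1 : forall i, m ord0 i = 0.
Variable l : 'I_n.+1 -> int.
Hypothesis HM : is_left_submodule (monomial_order v m) (diag_lattice v l).

Notation R := (monomial_order v m).
Notation M := (diag_lattice v l).
Notation pw := (pw pi).

Lemma R0 : (0 : 'M[D]_n.+1) \in R.
Proof. by apply/inRP => i j; rewrite mxE inPow0. Qed.

Lemma RD A B : A \in R -> B \in R -> A + B \in R.
Proof.
move=> /inRP hA /inRP hB; apply/inRP => i j; rewrite mxE.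
by apply: (inPowD (@Hadd)); [apply: hA|apply: hB].
Qed.

Lemma Rsum (I : Type) (r : seq I) (F : I -> 'M[D]_n.+1) :
  (forall i, F i \in R) -> \sum_(i <- r) F i \in R.
Proof. move=> h; apply: (big_ind (fun A => A \in R)); [exact: R0|exact: RD|move=> i _; exact: h]. Qed.

Lemma vu z : v z = 0 -> inPow v 0 z.
Proof. by move=> h; rewrite /inPow h lexx orbT. Qed.

Lemma Emx_in i j a : inPow v (m i j) a -> Emx i j a \in R.
Proof.
move=> h; apply/inRP => r c; rewrite mxE.
by case: andP => [[/eqP -> /eqP ->]|_] //; rewrite inPow0.
Qed.

Lemma ev_in i a : inPow v (l i) a -> ev i a \in M.
Proof.
move=> h; apply/inMP => r; rewrite mxE.
by case: eqP => [->|_] //; rewrite inPow0.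
Qed.

Lemma inPow_pw z : inPow v z (pw z).
Proof. by rewrite /inPow (vpw Hdiv (@Hmul) Hpi0 Hpi1) lexx orbT. Qed.

Lemma inPow_le a x : inPow v a x -> x != 0 -> a <= v x.
Proof. by rewrite /inPow => /orP [/eqP ->|//]; rewrite eqxx. Qed.

Lemma arith_fin (A B C E F : int) :
  A <= B + E -> B <= A - F + C -> C + E < F + 1 -> A = B + (F - C).
Proof. lia. Qed.

Lemma arith_nle (z : int) : ~ (z + 1 <= z).
Proof. lia. Qed.
Lemma arith_sub (a b : int) : b <= a -> 0 <= a - b.
Proof. lia. Qed.

Lemma fwd : is_projective R M -> exists (j : 'I_n.+1) (c : int), forall i, l i = m i j + c.
Proof.
have [HM0 HMD HMR] := HM.
move=> [k [p [s [pM [pD [pR [sR [sD [sR' ps]]]]]]]]].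
pose l0 := l ord0.
pose x0 : 'cV[D]_n.+1 := ev ord0 (pw l0).
have hx0 : x0 \in M by apply: ev_in; exact: inPow_pw.
pose S := s x0.
have SR : forall t, S t \in R by move=> t; exact: sR.
pose delta (t : 'I_k) (A : 'M[D]_n.+1) := fun i : 'I_k => if i == t then A else 0.
have deltaR : forall t A, A \in R -> forall i, delta t A i \in R.
  by move=> t A hA i; rewrite /delta; case: eqP => _ //; exact: R0.
pose y t j := p (delta t (Emx j j 1)).
have E11 : forall j, Emx j j 1 \in R.
  by move=> j; apply: Emx_in; rewrite Hmii; apply: vu; exact: (v1 (@Hmul)).
have yM : forall t j, y t j \in M by move=> t j; apply: pM; apply: deltaR.
have p0 : p (fun _ => 0) = 0.
  have := pD (fun _ => 0) (fun _ => 0) (fun _ => R0) (fun _ => R0).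
  have -> : (fun _ : 'I_k => (0 : 'M[D]_n.+1) + 0) = (fun _ => 0).
    by apply: functional_extensionality => i; rewrite addr0.
  by move=> h; apply: (addrI (p (fun _ => 0))); rewrite addr0 -h.
have psum : forall (I : Type) (r : seq I) (F : I -> 'I_k -> 'M[D]_n.+1),
    (forall q i, F q i \in R) ->
    p (fun i => \sum_(q <- r) F q i) = \sum_(q <- r) p (F q).
  move=> I r F hF; elim: r => [|a r IH].
    rewrite big_nil; rewrite -p0; congr p.
    by apply: functional_extensionality => i; rewrite big_nil.
  rewrite big_cons -IH -pD //; last by move=> i; apply: Rsum.
  by congr p; apply: functional_extensionality => i; rewrite big_cons.
have ysupp : forall t j, y t j = ev j (y t j j 0).
  move=> t j.
  have yE : y t j = Emx j j 1 *m y t j.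
    rewrite /y -pR //; last exact: deltaR.
    congr p; apply: functional_extensionality => i.
    rewrite /delta; case: eqP => _; last by rewrite mulr0.
    apply/matrixP => r c; rewrite -mulmxE MEmx !mxE.
    by rewrite eqxx andbT; case: (c == j); rewrite ?andbF ?andbT.
  apply/matrixP => r c; rewrite (ord1 c) {1}yE EmxM mul1r evE.
  by case: (r == j).
have decomp : p S = \sum_(t < k) \sum_(j < n.+1) S t *m y t j.
  have Sdec : S = fun i => \sum_(t < k) \sum_(j < n.+1) delta t (S t * Emx j j 1) i.
    apply: functional_extensionality => i.
    rewrite (bigD1 i) //= [X in _ = _ + X]big1 ?addr0; last first.
      move=> t hti; apply: big1 => j _; by rewrite /delta eq_sym (negbTE hti).
    apply/matrixP => r c; rewrite summxE /delta eqxx.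
    under eq_bigr do rewrite -mulmxE MEmx.
    by rewrite (eq_bigr (fun j => if j == c then S i r j else 0)) ?sum_ifE //
         => j _; rewrite eq_sym.
  rewrite {1}Sdec psum; last first.
    move=> t i; apply: Rsum => j; apply: deltaR.
    apply/inRP => r c; rewrite -mulmxE MEmx; case: eqP => [->|_].
      by move/inRP: (SR t); apply.
    exact: inPow0.
  apply: eq_bigr => t _; rewrite psum; last first.
    move=> j i; apply: deltaR.
    apply/inRP => r c; rewrite -mulmxE MEmx; case: eqP => [->|_].
      by move/inRP: (SR t); apply.
    exact: inPow0.
  apply: eq_bigr => j _; rewrite -pR //; last exact: deltaR.
  f_equal; apply: functional_extensionality => i; rewrite /delta.
  by case: (i == t); rewrite ?mulr0.
have hsum : \sum_(t < k) \sum_(j < n.+1) S t 0 j * y t j j 0 = pw l0.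
  have := congr1 (fun A : 'cV[D]_n.+1 => A ord0 ord0) (ps _ hx0); rewrite /= -/S decomp.
  rewrite evE eqxx summxE => <-; apply: eq_bigr => t _.
  rewrite summxE; apply: eq_bigr => j _.
  by rewrite [X in _ = (_ *m X) _ _]ysupp Mev.
pose term t j := S t 0 j * y t j j 0.
have [Hall|Hex] := boolP [forall t, forall j, inPow v (l0 + 1) (term t j)].
  exfalso.
  have : inPow v (l0 + 1) (pw l0).
    rewrite -hsum; apply: (inPow_sum (@Hadd)) => t _; apply: (inPow_sum (@Hadd)) => j _.
    by move/forallP: Hall => /(_ t) /forallP; apply.
  move/inPow_le => /(_ (pw_neq0 Hdiv Hpi0 _)).
  rewrite (vpw Hdiv (@Hmul) Hpi0 Hpi1); exact: arith_nle.
move/forallPn: Hex => [t /forallPn [j Hj]].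
move: Hj; rewrite /inPow negb_or => /andP [hnz hlt].
rewrite -ltNge in hlt.
pose a := S t 0 j; pose c := y t j j 0.
have ha : a != 0 := mul_eq0l hnz.
have hc : c != 0 := mul_eq0r hnz.
have hac : v a + v c < l0 + 1 by rewrite -Hmul.
exists j, (l0 - v a) => i.
have hup : l i <= m i j + v c.
  have hE : Emx i j (pw (m i j)) \in R by apply: Emx_in; exact: inPow_pw.
  move/inMP: (HMR _ _ hE (yM t j)) => /(_ i).
  rewrite EmxM eqxx -/c => /inPow_le h.
  have hp := pw_neq0 Hdiv Hpi0 (m i j).
  have := h (mul_neq0 Hdiv hp hc).
  by rewrite Hmul // (vpw Hdiv (@Hmul) Hpi0 Hpi1).
pose xi : 'cV[D]_n.+1 := ev i (pw (l i)).
have hxi : xi \in M by apply: ev_in; exact: inPow_pw.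
have hE0 : Emx ord0 i 1 \in R by apply: Emx_in; rewrite Hm1; apply: vu; exact: (v1 (@Hmul)).
have hl0 : l0 <= l i.
  move/inMP: (HMR _ _ hE0 hxi) => /(_ ord0).
  rewrite EmxM eqxx mul1r evE eqxx => /inPow_le.
  rewrite (vpw Hdiv (@Hmul) Hpi0 Hpi1); apply; exact: pw_neq0.
pose u := pw (l i) * (pw l0)^-1.
have hP0 := pw_neq0 Hdiv Hpi0 l0.
have hPi := pw_neq0 Hdiv Hpi0 (l i).
have hPV : (pw l0)^-1 != 0.
  by apply: unit_neq0; rewrite unitrV; apply: pw_unit.
have hu0 : u != 0 := mul_neq0 Hdiv hPi hPV.
have hvu : v u = l i - l0.
  by rewrite Hmul // (vV Hdiv (@Hmul) Hpi0 Hpi1 hP0) !(vpw Hdiv (@Hmul) Hpi0 Hpi1).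
have hU : Emx ord0 ord0 u \in R.
  apply: Emx_in; rewrite /inPow Hmii hvu; apply/orP; right; exact: arith_sub.
have heq : Emx ord0 i 1 *m xi = Emx ord0 ord0 u *m x0.
  apply/matrixP => r q; rewrite !EmxM !evE !eqxx.
  case: eqP => // _; rewrite mul1r /u mulrVK //; exact: (pw_unit Hdiv Hpi0).
have := congr1 (fun F : 'I_k -> 'M[D]_n.+1 => F t ord0 j) (sR' _ _ hE0 hxi).
rewrite heq sR' //= -/S -!mulmxE !EmxM !eqxx mul1r -/a => hsij.
have hlo : m i j <= v (u * a).
  have hua := mul_neq0 Hdiv hu0 ha.
  apply: (inPow_le _ hua).
  by rewrite hsij; move/inRP: (sR _ hxi t); apply.
rewrite (Hmul hu0 ha) hvu in hlo.
exact: (arith_fin hup hlo hac).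
Qed.

Lemma bwd : (exists (j : 'I_n.+1) (c : int), forall i, l i = m i j + c) ->
  is_projective R M.
Proof.
move=> [j [c hl]].
have hPc := pw_neq0 Hdiv Hpi0 c.
have hUc := pw_unit Hdiv Hpi0 c.
have hPV : (pw c)^-1 != 0 by apply: unit_neq0; rewrite unitrV.
have vc := vpw Hdiv (@Hmul) Hpi0 Hpi1 c.
have vcV := vV Hdiv (@Hmul) Hpi0 Hpi1 hPc.
exists 1%N, (fun y => \col_r (y ord0 r j * pw c)),
  (fun x => fun _ => \matrix_(r, q) (if q == j then x r ord0 * (pw c)^-1 else 0)).
split; [|split; [|split; [|split; [|split; [|split]]]]].
- move=> y hy; apply/inMP => r; rewrite mxE.
  have := inPowM_unit (@Hmul) ((proj1 (inRP _ _ _)) (hy ord0) r j) hPc.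
  by rewrite vc -hl.
- by move=> y z _ _; apply/matrixP => r q; rewrite !mxE mulrDl.
- move=> r0 y _ _; apply/matrixP => a b; rewrite -mulmxE !mxE big_distrl.
  by apply: eq_bigr => s0 _; rewrite !mxE mulrA.
- move=> x hx i; apply/inRP => r q; rewrite mxE; case: eqP => [->|_]; last exact: inPow0.
  have := inPowM_unit (@Hmul) ((proj1 (inMP _ _ _)) hx r) hPV.
  by rewrite vcV vc hl addrK.
- move=> x y _ _; apply: functional_extensionality => i; apply/matrixP => r q.
  by rewrite !mxE; case: eqP => _; rewrite ?mulrDl ?addr0.
- move=> r0 x _ _; apply: functional_extensionality => i; apply/matrixP => a b.
  rewrite -mulmxE !mxE; under [X in _ = X]eq_bigr do rewrite mxE.
  case: eqP => _.
    by rewrite big_distrl; apply: eq_bigr => s0 _; rewrite mulrA.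
  by rewrite big1 // => s0 _; rewrite mulr0.
- by move=> x _; apply/matrixP => r q; rewrite !mxE eqxx (ord1 q) mulrVK.
Qed.

End Fwd.

Unset Implicit Arguments.

Theorem theorem3p1 (k : fieldType) (D : unitRingType)
    (f : {rmorphism k -> D}) (v : D -> int)
    (HD : local_central_division_algebra f v)
    (n : nat) (m : 'I_n.+1 -> 'I_n.+1 -> int) (Hm : is_level m)
    (Hm1 : forall i, m ord0 i = 0)
    (l : 'I_n.+1 -> int)
    (HM : is_left_submodule (monomial_order v m) (diag_lattice v l)) :
  is_projective (monomial_order v m) (diag_lattice v l) <->
  exists (j : 'I_n.+1) (c : int), forall i, l i = m i j + c.
Proof.
have [Hdiv [[Hmul Hadd [pi [Hpi0 Hpi1]]] _]] := HD.
have [Hmii _] := Hm.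
split.
  exact: (fwd Hdiv Hmul Hadd Hpi0 Hpi1 Hmii Hm1 HM).
exact: (bwd Hdiv Hmul Hpi0 Hpi1).
Qed.
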